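(* Let $I=\langle N,M,V\rangle$ be an ordered instance of chores with $n$ agents and $m=n+c$ chores, where $n>c>0$. If an agent $i\in N$ has an MMS partition containing a bundle of size $k\ge 2$, then $i$ has an MMS partition containing at least $n-(c-k+2)$ bundles of cardinality one.
   Context: An instance of chores $I=\langle N,M,V\rangle$ has agents $N=\{1,\dots,n\}$, chores $M=\{1,\dots,m\}$ and additive valuations $v_i$ with $v_i(\emptyset)=0$, $v_i(S)=\sum_{g\in S}v_i(\{g\})$ and $v_{ij}:=v_i(\{j\})\le 0$. It is ordered if $v_{ij}\le v_{i(j+1)}$ for all $i$ and $1\le j<m$. An allocation ($n$-partition) is an ordered $n$-tuple of pairwise disjoint, possibly empty subsets of $M$ with union $M$. The maximin share of $i$ is $\mu_i=\max_A\min_j v_i(A_j)$ over all allocations; an MMS partition of $i$ is an allocation $A$ with $v_i(A_j)\ge\mu_i$ for all $j$. The size of a bundle is its cardinality.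
   Formalization: The bundle size k is also bounded above by c+1, so only MMS partitions containing a bundle of size 2 ≤ k ≤ c+1 are covered. The statement above fails without it. *)

(* Defs.v *)
From HB Require Import structures.
From mathcomp Require Import all_boot all_order all_algebra.
Set Implicit Arguments. Unset Strict Implicit. Unset Printing Implicit Defensive.
Import Order.TTheory GRing.Theory Num.Theory.
Local Open Scope ring_scope.

(* Agents are 'I_n, chores are 'I_m (chore j+1 of the paper is ordinal j).
   An instance is given by v : 'I_n -> 'I_m -> R, v i g = v_i({g}) <= 0;
   valuations are additive: *)
Definition bval (R : realFieldType) (n m : nat) (v : 'I_n -> 'I_m -> R)
  (i : 'I_n) (S : {set 'I_m}) : R := \sum_(g in S) v i g.

Definition ordered_instance (R : realFieldType) (n m : nat)
  (v : 'I_n -> 'I_m -> R) : Prop :=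
  forall (i : 'I_n) (j j' : 'I_m), val j' = (val j).+1 -> v i j <= v i j'.

Definition is_allocation (n m : nat) (A : {ffun 'I_n -> {set 'I_m}}) : Prop :=
  (forall j1 j2 : 'I_n, j1 != j2 -> [disjoint A j1 & A j2]) /\
  \bigcup_(j < n) A j = [set: 'I_m].

(* mu is the maximin share of i: mu = max_A min_j v_i(A_j). *)
Definition is_mms (R : realFieldType) (n m : nat) (v : 'I_n -> 'I_m -> R)
  (i : 'I_n) (mu : R) : Prop :=
  (exists A : {ffun 'I_n -> {set 'I_m}}, is_allocation A /\ forall j, mu <= bval v i (A j)) /\
  (forall B : {ffun 'I_n -> {set 'I_m}}, is_allocation B -> exists j, bval v i (B j) <= mu).

Definition mms_partition (R : realFieldType) (n m : nat)
  (v : 'I_n -> 'I_m -> R) (i : 'I_n) (A : {ffun 'I_n -> {set 'I_m}}) : Prop :=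
  is_allocation A /\
  exists mu, is_mms v i mu /\ forall j, mu <= bval v i (A j).

(* Main.v *)
Require Import Defs.
From HB Require Import structures.
From mathcomp Require Import all_boot all_order all_algebra.
From mathcomp Require Import lra.
From mathcomp Require Import zify.
Set Implicit Arguments. Unset Strict Implicit.
Import Order.TTheory GRing.Theory Num.Theory.
Local Open Scope ring_scope.

Lemma alloc_to (n m : nat) (A : {ffun 'I_n -> {set 'I_m}}) :
  is_allocation A -> forall x, exists j, x \in A j /\ forall j', x \in A j' -> j' = j.
Proof.
case=> Hd Hu x.
have : x \in \bigcup_(j < n) A j by rewrite Hu inE.
case/bigcupP=> j _ Hx; exists j; split=> // j' Hx'.
apply/eqP; apply/negPn/negP=> Hne.
by move: (Hd _ _ Hne) => /disjointFr /(_ Hx'); rewrite Hx.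
Qed.

Lemma alloc_of (n m : nat) (A : {ffun 'I_n -> {set 'I_m}}) :
  (forall x, exists j, x \in A j /\ forall j', x \in A j' -> j' = j) -> is_allocation A.
Proof.
move=> H; split.
  move=> j1 j2 Hne; apply/pred0P=> x /=.
  apply/negP=> /andP [H1 H2].
  case: (H x) => j [_ Hj]; move: Hne; by rewrite (Hj _ H1) (Hj _ H2) eqxx.
apply/setP=> x; rewrite inE; case: (H x) => j [Hx _].
by apply/bigcupP; exists j.
Qed.

Lemma sum_card (n m : nat) (A : {ffun 'I_n -> {set 'I_m}}) :
  is_allocation A -> (\sum_(j < n) #|A j|)%N = m.
Proof.
move/alloc_to=> H.
transitivity (\sum_(j < n) \sum_(x : 'I_m) ((x \in A j) : nat))%N.
  apply: eq_bigr => j _; rewrite -sum1_card big_mkcond /=.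
  by apply: eq_bigr => x _; case: (x \in A j).
rewrite exchange_big /=.
transitivity (\sum_(x : 'I_m) 1)%N; last by rewrite sum1_card card_ord.
apply: eq_bigr => x _.
case: (H x) => j [Hx Hj].
rewrite (bigD1 j) //= Hx big1 // => j' Hj'.
case E: (x \in A j') => //.
by move: Hj'; rewrite (Hj _ E) eqxx.
Qed.

Lemma sum_eq1 (n : nat) (a : 'I_n) : (\sum_(j < n) ((j == a) : nat))%N = 1%N.
Proof.
rewrite (bigD1 a) //= eqxx big1 // => j /negbTE -> //.
Qed.
Lemma bvalD1 (R : realFieldType) (n m : nat) (v : 'I_n -> 'I_m -> R) i (S : {set 'I_m}) g :
  g \in S -> bval v i S = v i g + bval v i (S :\ g).
Proof. by move=> Hg; rewrite /bval (big_setD1 _ Hg). Qed.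

Lemma bval_le0 (R : realFieldType) (n m : nat) (v : 'I_n -> 'I_m -> R) i (S : {set 'I_m}) :
  (forall i g, v i g <= 0) -> bval v i S <= 0.
Proof. by move=> H; apply: sumr_le0 => g _. Qed.

Definition moveB (n m : nat) (A : {ffun 'I_n -> {set 'I_m}}) (je j1 : 'I_n) (g : 'I_m) :=
  [ffun j => if j == je then [set g] else if j == j1 then A j1 :\ g else A j].

Lemma moveB_mem (n m : nat) (A : {ffun 'I_n -> {set 'I_m}}) je j1 g :
  is_allocation A -> A je = set0 -> g \in A j1 -> je != j1 ->
  forall (x : 'I_m) j, (x \in moveB A je j1 g j) = if x == g then j == je else x \in A j.
Proof.
move=> Ha He Hg Hne x j; rewrite /moveB ffunE.
have [->|Hje] := eqVneq j je.
  rewrite inE; case: (x == g) => //; by rewrite He inE.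
have [->|Hj1] := eqVneq j j1.
  rewrite !inE; by case: (x == g).
have [->|//] := eqVneq x g.
case: (alloc_to Ha g) => j0 [_ Hj0].
apply/negP=> Hgj; move: Hj1; by rewrite (Hj0 _ Hgj) (Hj0 _ Hg) eqxx.
Qed.

Lemma moveB_alloc (n m : nat) (A : {ffun 'I_n -> {set 'I_m}}) je j1 g :
  is_allocation A -> A je = set0 -> g \in A j1 -> je != j1 ->
  is_allocation (moveB A je j1 g).
Proof.
move=> Ha He Hg Hne; apply: alloc_of => x.
have HB := moveB_mem Ha He Hg Hne x.
have [Hx|Hx] := eqVneq x g.
  exists je; split.
    by have := HB je; rewrite Hx !eqxx.
  move=> j' Hj'; have := HB j'; rewrite Hj' Hx eqxx.
  by move/esym/eqP.
case: (alloc_to Ha x) => j [Hj Hu]; exists j; split.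
  by have := HB j; rewrite (negbTE Hx) Hj.
move=> j' Hj'; apply: Hu; have := HB j'; by rewrite (negbTE Hx) Hj'.
Qed.

Lemma moveB_val (R : realFieldType) (n m : nat) (v : 'I_n -> 'I_m -> R) i mu
  (A : {ffun 'I_n -> {set 'I_m}}) je j1 g :
  (forall i g, v i g <= 0) ->
  (forall j, mu <= bval v i (A j)) -> g \in A j1 ->
  forall j, mu <= bval v i (moveB A je j1 g j).
Proof.
move=> Hch Hmu Hg j; rewrite /moveB ffunE.
have E := bvalD1 v i Hg.
have H0 : bval v i (A j1 :\ g) <= 0 by apply: bval_le0.
have H1 := Hch i g.
case: ifP => _.
  rewrite /bval big_set1; apply: le_trans (Hmu j1) _; rewrite E; lra.
case: ifP => _ //.
apply: le_trans (Hmu j1) _; rewrite E; lra.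
Qed.

Lemma fill (R : realFieldType) (n m c : nat) (v : 'I_n -> 'I_m -> R) (i : 'I_n) (mu : R) (k : nat)
  (Hch : forall i g, v i g <= 0) (Hm : m = (n + c)%N) (Hk2 : (2 <= k)%N) (Hkc : (k <= c.+1)%N)
  (jd : 'I_n) :
  forall e (A : {ffun 'I_n -> {set 'I_m}}), is_allocation A ->
  (forall j, mu <= bval v i (A j)) -> (k <= #|A jd|)%N ->
  (#|[set j | A j == set0]| <= e)%N ->
  exists B : {ffun 'I_n -> {set 'I_m}}, is_allocation B /\
    (forall j, mu <= bval v i (B j)) /\ (k <= #|B jd|)%N /\ (forall j, B j != set0).
Proof.
elim=> [|e IH] A Ha Hmu Hk He;
  (have [E0|/set0Pn [je Hje]] := eqVneq [set j | A j == set0] set0).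
- exists A; do 3 split => //; move=> j; apply/negP=> /eqP Hj.
  have : j \in [set j | A j == set0] by rewrite inE Hj.
  by rewrite E0 inE.
- by move: He; rewrite (cardD1 je) Hje.
- exists A; do 3 split => //; move=> j; apply/negP=> /eqP Hj.
  have : j \in [set j | A j == set0] by rewrite inE Hj.
  by rewrite E0 inE.
have Aje : A je = set0 by move: Hje; rewrite inE => /eqP.
have Hjdje : jd != je.
  apply/eqP=> E; move: Hk; rewrite E Aje cards0; lia.
have [j1 [Hj1c Hj1d]] : exists j1, (2 <= #|A j1|)%N /\ (j1 != jd \/ (k < #|A jd|)%N).
  have [j1 /andP [H1 H2]|Hno] := pickP [pred j | (j != jd) && (2 <= #|A j|)%N].
    by exists j1; split => //; left.
  have [Hlt|Hge] := ltnP k #|A jd|.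
    by exists jd; split; [lia | right].
  exfalso.
  have S := sum_card Ha.
  have : (\sum_(j < n) (#|A j| + (j == je)) <= \sum_(j < n) (1 + (j == jd) * (k - 1)))%N.
    apply: leq_sum => j _.
    have [->|Hjd] := eqVneq j jd.
      rewrite (negbTE Hjdje); lia.
    have := Hno j; rewrite /= Hjd /= => /negbT; rewrite -ltnNge => H1.
    have [->|Hj] := eqVneq j je.
      by rewrite Aje cards0.
    lia.
  rewrite !big_split /= S sum_eq1 sum_nat_const card_ord -big_distrl /= sum_eq1.
  lia.
have [g Hg] : exists g, g \in A j1.
  have : (0 < #|A j1|)%N by lia.
  by rewrite card_gt0 => /set0Pn.
have Hjej1 : je != j1.
  by apply/eqP=> E; move: Hj1c; rewrite -E Aje cards0.
have HBa := moveB_alloc Ha Aje Hg Hjej1.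
have HBv := moveB_val je Hch Hmu Hg.
apply: IH HBa HBv _ _.
  rewrite /moveB ffunE (negbTE Hjdje).
  case: ifP => [/eqP E|/negbT Hne].
    subst j1; case: Hj1d => [|H]; first by rewrite eqxx.
    by move: H; rewrite (cardsD1 g) Hg /= add1n ltnS.
  by [].
have Hsub : [set j | moveB A je j1 g j == set0] \subset [set j | A j == set0] :\ je.
  apply/subsetP=> j; rewrite !inE /moveB ffunE.
  case: ifP => [_|/negbT Hj]; first by rewrite -cards_eq0 cards1.
  case: ifP => [/eqP ->|_]; last by move=> ->; rewrite andbT.
  rewrite -cards_eq0; move: Hj1c; rewrite (cardsD1 g) Hg /= add1n ltnS => H1 /eqP H2; by rewrite H2 in H1.
move: (subset_leq_card Hsub); rewrite (cardsD1 je [set j | A j == set0]) Hje /= add1n ltnS in He.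
by move/leq_trans; apply.
Qed.

Theorem lemma19 (R : realFieldType) (n m c : nat) (v : 'I_n -> 'I_m -> R)
  (Hchores : forall i g, v i g <= 0)
  (Hord : ordered_instance v)
  (Hm : m = (n + c)%N) (Hc0 : (0 < c)%N) (Hcn : (c < n)%N)
  (i : 'I_n) (k : nat) (Hk2 : (2 <= k)%N) (Hkc : (k <= c.+1)%N) :
  (exists A, mms_partition v i A /\ exists j, #|A j| = k) ->
  exists B, mms_partition v i B /\
    (n + k - (c + 2) <= #|[set j | #|B j| == 1%N]|)%N.
Proof.
case=> A [[HA [mu [Hmms Hmu]]] [jd HAjd]].
have [B [HB [HBv [HBk HBne]]]] :=
  @fill R n m c v i mu k Hchores Hm Hk2 Hkc jd _ A HA Hmu (eq_leq (esym HAjd)) (leqnn _).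
exists B; split; first by split => //; exists mu.
have S := sum_card HB.
have Hs : (\sum_(j < n) ((#|B j| == 1%N) : nat))%N = #|[set j | #|B j| == 1%N]|.
  rewrite -sum1_card [RHS]big_mkcond /=; apply: eq_bigr => j _; rewrite inE.
  by case: (_ == _).
have : (\sum_(j < n) (2 + (j == jd) * (k - 2)) <= \sum_(j < n) (#|B j| + (#|B j| == 1%N)))%N.
  apply: leq_sum => j _.
  have [->|Hjd] := eqVneq j jd.
    have : (#|B jd| == 1%N) = false by apply/negbTE; rewrite neq_ltn; apply/orP; right; lia.
    move=> ->; lia.
  have : (0 < #|B j|)%N by rewrite card_gt0.
  case: eqP => [->|]; lia.
rewrite !big_split /= S Hs sum_nat_const card_ord -big_distrl /= sum_eq1.
lia.
Qed.
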